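(* Let $X$ be a non-empty set and let $I,\Phi:X\to\mathbb{R}$ and $\mu>0$ be such that the function $I-\mu\Phi$ has a global minimum in $X$. Then at least one of the following assertions holds: (a) for each filtering cover $\mathcal{N}$ of $X$ there exists $A\in\mathcal{N}$ such that $$\sup_{\lambda\in\mathbb{R}}\inf_{x\in A}\big(I(x)-\mu(e^{\Phi(x)-\lambda}+\lambda)\big)<\inf_{x\in A}\sup_{\lambda\in\Phi(A)}\big(I(x)-\mu(e^{\Phi(x)-\lambda}+\lambda)\big);$$ (b) for each global minimum $u$ of $I-\mu\Phi$ one has $$I(u)\leq I(x)-\mu\big(e^{\Phi(x)-\Phi(u)}-1\big)$$ for all $x\in X$.
   Context: A family $\mathcal{N}$ of non-empty subsets of $X$ is a filtering cover of $X$ if $\bigcup_{A\in\mathcal{N}}A=X$ and for each $A_1,A_2\in\mathcal{N}$ there is $A_3\in\mathcal{N}$ with $A_1\cup A_2\subseteq A_3$. *)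

(* Defs.v *)
From HB Require Import structures.
From mathcomp Require Import all_boot all_order all_algebra.
From mathcomp Require Import all_classical all_reals all_analysis.
Set Implicit Arguments. Unset Strict Implicit. Unset Printing Implicit Defensive.
Import Order.TTheory GRing.Theory Num.Theory.
Local Open Scope classical_set_scope.
Local Open Scope ring_scope.

Definition filtering_cover (X : Type) (N : set (set X)) : Prop :=
  (forall A, N A -> A !=set0) /\
  \bigcup_(A in N) A = setT /\
  (forall A1 A2, N A1 -> N A2 -> exists2 A3, N A3 & A1 `|` A2 `<=` A3).

Definition is_global_min (X : Type) (R : realType) (f : X -> R) (u : X) : Prop :=
  forall x, f u <= f x.

Definition Jfun (X : Type) (R : realType) (I Phi : X -> R) (mu : R)
  (x : X) (l : R) : R :=
  I x - mu * (expR (Phi x - l) + l).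

Definition supinf (X : Type) (R : realType) (I Phi : X -> R) (mu : R)
  (A : set X) : \bar R :=
  ereal_sup [set ereal_inf [set (Jfun I Phi mu x l)%:E | x in A] | l in [set: R]].

Definition infsup (X : Type) (R : realType) (I Phi : X -> R) (mu : R)
  (A : set X) : \bar R :=
  ereal_inf [set ereal_sup [set (Jfun I Phi mu x l)%:E | l in Phi @` A] | x in A].

(* Main.v *)
Require Import Defs.
From HB Require Import structures.
From mathcomp Require Import all_boot all_order all_algebra.
From mathcomp Require Import all_classical all_reals all_analysis.
From mathcomp Require Import ring lra.
Import Order.TTheory GRing.Theory Num.Theory.
Local Open Scope classical_set_scope.
Local Open Scope ring_scope.
Lemma key (R : realType) (Iu Ix a b mu : R) : 0 < mu ->
  Ix - mu * (expR (b - a) - 1) < Iu ->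
  exists2 d, 0 < d & forall l,
    Iu - mu * (expR (a - l) + l) <= Iu - mu * (1 + a) - d \/
    Ix - mu * (expR (b - l) + l) <= Iu - mu * (1 + a) - d.
Proof.
move=> mu0 hlt.
set K := expR (b - a).
have K0 : 0 < K by apply: expR_gt0.
set D := Iu - (Ix - mu * (K - 1)).
have D0 : 0 < D by rewrite /D subr_gt0.
set E := K - 1.
set q := 4 * mu * E ^+ 2 + 2 * D.
have q0 : 0 < q by rewrite /q; have := sqr_ge0 E; nra.
set w := D / q.
have wq : w * q = D by rewrite /w mulfVK // gt_eqF.
have w0 : 0 < w by rewrite /w divr_gt0.
have hE : 0 <= w * (mu * E ^+ 2) by apply: mulr_ge0; [exact: ltW|apply: mulr_ge0; [exact: ltW|exact: sqr_ge0]].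
have wq2 : w * (4 * mu * E ^+ 2 + 2 * D) = D by exact: wq.
have wq' : 4 * (w * (mu * E ^+ 2)) + 2 * (w * D) = D by rewrite -[RHS]wq2; ring.
have wD : 0 < w * D by apply: mulr_gt0.
have w2 : w <= 1/2 by nra.
have wE : mu * w * E ^+ 2 <= D / 4.
  have -> : mu * w * E ^+ 2 = w * (mu * E ^+ 2) by ring.
  lra.
exists (w * D / 2); first by apply: divr_gt0 => //; apply: mulr_gt0.
move=> l.
set s := l - a.
set E0 := expR (a - l).
have E00 : 0 < E0 by apply: expR_gt0.
have hbl : expR (b - l) = K * E0 by rewrite /K /E0 -expRD; congr expR; lra.
set c := 1 - w + w * K.
have c0 : 1/2 <= c by rewrite /c; nra.
have cpos : 0 < c by lra.
set lc := ln c.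
have hlc : expR lc = c by rewrite /lc lnK // qualifE.
have h1 : 1 + (lc - s) <= c * E0.
  have -> : c * E0 = expR (lc - s) by rewrite expRD hlc /E0 /s; congr (_ * expR _); lra.
  exact: expR_ge1Dx.
have h2 : 1 - lc <= c^-1 by rewrite -hlc -expRN; have := expR_ge1Dx (- lc); lra.
have cc : c * c^-1 = 1 by rewrite mulfV // gt_eqF.
have h3 : c * E0 + s >= 2 - c^-1 by lra.
have hcomb : (1 - w) * (Iu - mu * (E0 + l)) + w * (Ix - mu * (K * E0 + l))
    <= Iu - mu * (1 + a) - w * D / 2.
  have eq1 : (1 - w) * (Iu - mu * (E0 + l)) + w * (Ix - mu * (K * E0 + l))
     = Iu - mu * (1 + a) - w * D - mu * (c * E0 + s - c) .
    rewrite /D /c /s /E; ring.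
  rewrite eq1.
  (* need mu * (c*E0 + s - c) >= - w*D/2 ; have c*E0+s-c >= 2 - 1/c - c = -(c-1)^2/c *)
  have hc1 : c - 1 = w * E by rewrite /c /E; ring.
  have hic : 0 < c^-1 by rewrite invr_gt0.
  have h4 : 2 - c^-1 - c = - ((c - 1) ^+ 2 * c^-1).
    have : (c - 1) ^+ 2 * c^-1 = c * (c * c^-1) - 2 * (c * c^-1) + c^-1 by ring.
    rewrite cc; move=> ->; ring.
  have h5 : (c - 1) ^+ 2 * c^-1 <= 2 * (w * E) ^+ 2.
    have : c^-1 <= 2.
      have : c * c^-1 <= c * 2 by rewrite cc; lra.
      by rewrite ler_pM2l.
    rewrite hc1 => hi; have := sqr_ge0 (w * E); nra.
  have h6 : mu * (2 * (w * E) ^+ 2) <= w * D / 2.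
    have -> : mu * (2 * (w * E) ^+ 2) = 2 * w * (mu * w * E ^+ 2) by ring.
    nra.
  nra.
case: (lerP (Iu - mu * (E0 + l)) (Iu - mu * (1 + a) - w * D / 2)) => H1; first by left.
right; rewrite hbl.
case: (lerP (Ix - mu * (K * E0 + l)) (Iu - mu * (1 + a) - w * D / 2)) => H2 //.
exfalso; nra.
Qed.

Theorem theorem3p6 (R : realType) (X : Type) (x0 : X) (I Phi : X -> R) (mu : R)
  (hmu : 0 < mu)
  (hmin : exists u : X, is_global_min (fun x => I x - mu * Phi x) u) :
  (forall N : set (set X), filtering_cover N ->
     exists2 A, N A & (supinf I Phi mu A < infsup I Phi mu A)%E)
  \/
  (forall u : X, is_global_min (fun x => I x - mu * Phi x) u ->
     forall x : X, I u <= I x - mu * (expR (Phi x - Phi u) - 1)).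
Proof.
case: (pselect (forall N : set (set X), filtering_cover N ->
     exists2 A, N A & (supinf I Phi mu A < infsup I Phi mu A)%E)) => [H|H].
  by left.
right => u hu x; rewrite leNgt; apply/negP => hlt.
apply: H => N [_ [hcov hdir]].
have : setT u by [].
rewrite -hcov => -[A1 NA1 A1u].
have : setT x by [].
rewrite -hcov => -[A2 NA2 A2x].
have [A NA sA] := hdir _ _ NA1 NA2.
have Au : A u by apply: sA; left.
have Ax : A x by apply: sA; right.
exists A => //.
have [d d0 hd] := @key R _ _ _ _ _ hmu hlt.
apply: (@le_lt_trans _ _ (I u - mu * (1 + Phi u) - d)%:E).
  apply: ge_ereal_sup => _ [l _ <-].
  case: (hd l) => hl.
    by apply: ge_ereal_inf; exists (Jfun I Phi mu u l)%:E; [exists u|rewrite lee_fin].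
  by apply: ge_ereal_inf; exists (Jfun I Phi mu x l)%:E; [exists x|rewrite lee_fin].
apply: (@lt_le_trans _ _ (I u - mu * (1 + Phi u))%:E).
  by rewrite lte_fin; lra.
apply: le_ereal_inf_tmp => _ [y Ay <-].
apply: (@le_trans _ _ (Jfun I Phi mu y (Phi y))%:E).
  rewrite lee_fin /Jfun subrr expR0.
  have := hu y; rewrite /=; lra.
by apply: ereal_sup_ubound; exists (Phi y) => //; exists y.
Qed.
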